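(* Let $(R,d)$ be a fusion algebra with a finite generating set $X\subseteq I$. Then $\mathrm{F\o l}^{\mathrm{inn}}_X(R,d)\le1-\frac{1}{\omega_X(R,d)}$, and consequently $\mathrm{F\o l}^{\mathrm{inn}}(R,d)\le1-\frac{1}{\omega(R,d)}$.
   Context: A fusion algebra $(R,d)$ consists of a set $I$ with a distinguished $e$ and involution $\alpha\mapsto\bar\alpha$, a unital ring structure on $R=\mathbb{Z}[I]$ with unit $e$ and $\xi\eta=\sum_\alpha N^\alpha_{\xi,\eta}\alpha$, $N^\alpha_{\xi,\eta}\in\mathbb{Z}_{\ge0}$ finitely many nonzero, the involution extending to a $\mathbb{Z}$-linear antimultiplicative involution, Frobenius reciprocity $N^\alpha_{\xi,\eta}=N^\xi_{\alpha,\bar\eta}=N^\eta_{\bar\xi,\alpha}$, and a $\mathbb{Z}$-linear multiplicative $d:R\to\mathbb{R}$ with $d(\bar\alpha)=d(\alpha)\ge1$ on $I$. $\mathrm{supp}(r)$ is the set of $\alpha\in I$ with nonzero coefficient in $r$; $\alpha\subseteq r$ means $\alpha\in\mathrm{supp}(r)$. $|A|=\sum_{\alpha\in A}d(\alpha)^2$. A finite generating set is a finite $X\subseteq I$ with $\bar X=X$ such that every $\alpha\in I$ satisfies $\alpha\subseteq x_1\cdots x_n$ for some $x_i\in X$. $\ell_X(e)=0$, otherwise $\ell_X(\alpha)$ is the least such $n\ge1$; $B_X(n)=\{\alpha:\ell_X(\alpha)\le n\}$; $\omega_X(R,d)=\lim_n|B_X(n)|^{1/n}$ (exists), $\omega(R,d)=\inf_X\omega_X(R,d)$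 over finite generating sets. The inner boundary is $\partial^{\mathrm{inn}}_X(A)=\{\alpha\in A:\exists x\in X,\ \mathrm{supp}(\alpha x)\not\subseteq A\}$; $\mathrm{F\o l}^{\mathrm{inn}}_X(R,d)=\inf_A|\partial^{\mathrm{inn}}_X(A)|/|A|$ over nonempty finite $A\subseteq I$, and $\mathrm{F\o l}^{\mathrm{inn}}(R,d)=\inf_X\mathrm{F\o l}^{\mathrm{inn}}_X(R,d)$ over finite generating sets. *)

(* Defs.v *)
From HB Require Import structures.
From mathcomp Require Import all_boot all_order all_algebra.
From mathcomp Require Import finmap.
From mathcomp Require Import all_classical all_reals all_analysis.
Set Implicit Arguments. Unset Strict Implicit. Unset Printing Implicit Defensive.
Import Order.TTheory GRing.Theory Num.Theory.
Local Open Scope classical_set_scope.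
Local Open Scope fset_scope.
Local Open Scope ring_scope.

(* A fusion algebra (R = Z[I], d) over the index set I, with d real-valued
   (values in an arbitrary realType Rl, e.g. the real numbers).
   fN a x y = N^a_{x,y} is the coefficient of a in the product x*y of basis
   elements;  fsupp x y is the (finite) support of x*y. *)
Record fusion_algebra (Rl : realType) (I : choiceType) := FusionAlgebra {
  fe : I;
  fbar : I -> I;
  fN : I -> I -> I -> nat;
  fsupp : I -> I -> seq I;
  fd : I -> Rl;
  fbarK : forall a, fbar (fbar a) = a;
  fsupp_uniq : forall x y, uniq (fsupp x y);
  fsuppE : forall x y a, (a \in fsupp x y) = (fN a x y != 0)%N;
  fN_e_l : forall a x, fN a fe x = (a == x) :> nat;
  fN_e_r : forall a x, fN a x fe = (a == x) :> nat;
  (* associativity (x y) z = x (y z), coefficientwise *)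
  fN_assoc : forall x y z a,
    (\sum_(b <- fsupp x y) fN b x y * fN a b z =
     \sum_(b <- fsupp y z) fN b y z * fN a x b)%N;
  (* the involution is antimultiplicative: bar(x y) = bar y bar x *)
  fN_bar : forall a x y, fN (fbar a) (fbar y) (fbar x) = fN a x y;
  fN_frob1 : forall a x y, fN a x y = fN x a (fbar y);
  fN_frob2 : forall a x y, fN a x y = fN y (fbar x) a;
  (* d is multiplicative (its Z-linear extension is then automatic) *)
  fd_mul : forall x y, fd x * fd y = \sum_(a <- fsupp x y) (fN a x y)%:R * fd a;
  fd_bar : forall a, fd (fbar a) = fd a;
  fd_ge1 : forall a, 1 <= fd a
}.

Section FusionDefs.
Variables (Rl : realType) (I : choiceType) (F : fusion_algebra Rl I).
Local Notation e := (fe F).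
Local Notation N := (fN F).

(* An element of N[I] given by a (uniq) support list and a coefficient
   function; right multiplication by a basis element x:
   (sum_b c_b b) x = sum_b c_b sum_a N^a_{b,x} a. *)
Definition mul_basis (p : seq I * (I -> nat)) (x : I) : seq I * (I -> nat) :=
  (undup (flatten [seq fsupp F b x | b <- p.1]),
   fun a => (\sum_(b <- p.1) p.2 b * N a b x)%N).

Definition word_prod (w : seq I) : seq I * (I -> nat) :=
  foldl mul_basis ([:: e], fun a => nat_of_bool (a == e)) w.

Definition in_prod (a : I) (w : seq I) : bool := ((word_prod w).2 a != 0)%N.

Definition generating (X : {fset I}) : Prop :=
  [fset fbar F x | x in X] = X /\
  forall a : I, exists w : seq I,
    (1 <= size w)%N /\ all (fun x => x \in X) w /\ in_prod a w.

Definition length_pred (X : {fset I}) (a : I) (n : nat) : bool :=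
  `[< (1 <= n)%N /\ exists w : seq I,
        size w = n /\ all (fun x => x \in X) w /\ in_prod a w >].

(* word length ell_X(a) : 0 for e, otherwise the least admissible n
   (junk value 0 if there is none, which cannot happen for generating X) *)
Definition ell (X : {fset I}) (a : I) : nat :=
  if a == e then 0%N else
  match pselect (exists n, length_pred X a n) with
  | left h => ex_minn h
  | right _ => 0%N
  end.

Definition ball (X : {fset I}) (n : nat) : set I := [set a | (ell X a <= n)%N].

Definition mass (A : set I) : Rl := \sum_(a \in A) (fd F a) ^+ 2.

Definition omegaX (X : {fset I}) : Rl :=
  limn (fun n : nat => powR (mass (ball X n)) (n%:R)^-1).

Definition omega : Rl := inf [set w | exists X, generating X /\ w = omegaX X].

Definition inner_boundary (X : {fset I}) (A : {fset I}) : set I :=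
  [set a | a \in A /\ exists x, x \in X /\ ~ {subset fsupp F a x <= A}].

Definition FolX (X : {fset I}) : Rl :=
  inf [set r | exists A : {fset I}, A != fset0 /\
          r = mass (inner_boundary X A) / mass [set a | a \in A]].

Definition Fol : Rl := inf [set r | exists X, generating X /\ r = FolX X].

End FusionDefs.

(* Main.v *)
Set Warnings "-all".
Require Import Defs.
From HB Require Import structures.
From mathcomp Require Import all_boot all_order all_algebra.
From mathcomp Require Import finmap.
From mathcomp Require Import all_classical all_reals all_analysis.
From mathcomp Require Import lra.
Import Order.TTheory GRing.Theory Num.Theory.
Local Open Scope ring_scope.
Local Open Scope classical_set_scope.
Set Implicit Arguments.

Lemma wp_ok (Rl : realType) (I : choiceType) (F : fusion_algebra Rl I) w a :
  ((word_prod F w).2 a != 0)%N -> a \in (word_prod F w).1.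
Proof.
case/lastP: w => [|w x].
  by rewrite /word_prod /=; case: (a =P fe F) => [->|] //; rewrite inE.
rewrite /word_prod foldl_rcons /= sum_nat_seq_eq0 => /allPn [b bin].
rewrite /= muln_eq0 negb_or => /andP[_ hN].
by rewrite mem_undup; apply/flatten_mapP; exists b => //; rewrite fsuppE.
Qed.

Lemma in_prod_step (Rl : realType) (I : choiceType) (F : fusion_algebra Rl I) w a b x :
  in_prod F a w -> (fN F b a x != 0)%N -> in_prod F b (rcons w x).
Proof.
move=> ha hN; have := @wp_ok _ _ F w a ha; move: ha.
rewrite /in_prod /word_prod foldl_rcons /= sum_nat_seq_eq0 => ha ain.
apply/allPn; exists a => //=; by rewrite muln_eq0 negb_or ha hN.
Qed.

Lemma ell_e (Rl : realType) (I : choiceType) (F : fusion_algebra Rl I) X :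
  ell F X (fe F) = 0%N.
Proof. by rewrite /ell eqxx. Qed.

Lemma ell_spec (Rl : realType) (I : choiceType) (F : fusion_algebra Rl I) X a :
  generating F X -> exists w, size w = ell F X a /\ all (fun x => x \in X) w /\ in_prod F a w.
Proof.
move=> [_ gen]; rewrite /ell; case: eqP => [->|ne].
  by exists [::]; rewrite /in_prod /word_prod /= eqxx.
case: pselect => [h|nh]; last first.
  exfalso; apply: nh; have [w [s [aw ip]]] := gen a.
  by exists (size w); apply/asboolP; split => //; exists w.
case: ex_minnP => n /asboolP [_ [w [sw [aw ipw]]]] _.
by exists w.
Qed.

Lemma ell_le (Rl : realType) (I : choiceType) (F : fusion_algebra Rl I) X a n :
  a != fe F -> length_pred F X a n -> (ell F X a <= n)%N.
Proof.
move=> ne h; rewrite /ell (negbTE ne); case: pselect => [h'|nh].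
  by case: ex_minnP => m _; apply.
by exfalso; apply: nh; exists n.
Qed.

Lemma ell_step (Rl : realType) (I : choiceType) (F : fusion_algebra Rl I) X a b x :
  generating F X -> x \in X -> (fN F b a x != 0)%N -> (ell F X b <= (ell F X a).+1)%N.
Proof.
move=> gen xX hN; have [w [sw [aw ipw]]] := ell_spec a gen.
case: (b =P fe F) => [->|neb]; first by rewrite ell_e.
apply: ell_le; first exact/eqP.
apply/asboolP; split => //; exists (rcons w x).
rewrite size_rcons sw all_rcons xX aw; split => //; split => //.
exact: in_prod_step ipw hN.
Qed.

Lemma fd2_ge1 (Rl : realType) (I : choiceType) (F : fusion_algebra Rl I) a :
  1 <= fd F a ^+ 2.
Proof. exact/exprn_ege1/fd_ge1. Qed.

Lemma mass_ge0 (Rl : realType) (I : choiceType) (F : fusion_algebra Rl I) A :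
  0 <= mass F A.
Proof.
rewrite /mass; apply: sumr_ge0 => i _.
exact: le_trans (fd2_ge1 F i).
Qed.

Lemma mass_infinite (Rl : realType) (I : choiceType) (F : fusion_algebra Rl I) A :
  ~ finite_set A -> mass F A = 0.
Proof.
move=> inf; rewrite /mass no_finite_support ?big_nil //.
rewrite setIidl // => x _ /=; apply/eqP.
by rewrite gt_eqF // (lt_le_trans _ (fd2_ge1 F x)).
Qed.

Lemma mass_D (Rl : realType) (I : choiceType) (F : fusion_algebra Rl I) A B :
  finite_set B -> A `<=` B -> mass F B = mass F A + mass F (B `\` A).
Proof.
move=> finB AB; rewrite /mass -{1}(setDUK AB) fsbigU0 //.
- exact: sub_finite_set finB.
- exact: sub_finite_set finB.
- by move=> x [Ax [_ nAx]].
Qed.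

Lemma mass_le (Rl : realType) (I : choiceType) (F : fusion_algebra Rl I) A B :
  finite_set B -> A `<=` B -> mass F A <= mass F B.
Proof. by move=> finB AB; rewrite (mass_D F finB AB) lerDl mass_ge0. Qed.

Lemma mass_ge1 (Rl : realType) (I : choiceType) (F : fusion_algebra Rl I) A a :
  finite_set A -> A a -> 1 <= mass F A.
Proof.
move=> finA Aa; apply: le_trans (fd2_ge1 F a) _.
have <- : mass F [set a] = fd F a ^+ 2 by rewrite /mass fsbig_set1.
by apply: mass_le => // y ->.
Qed.

Lemma FolS_01 (Rl : realType) (I : choiceType) (F : fusion_algebra Rl I) X r :
  (exists A : {fset I}, A != fset0 /\
          r = mass F (inner_boundary F X A) / mass F [set a | a \in A]) ->
  0 <= r <= 1.
Proof.
move=> [A [A0 ->]].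
have [a aA] := fset0Pn _ A0.
have m1 : 1 <= mass F [set a | a \in A] by apply: (@mass_ge1 _ _ F _ a (finite_fset A)).
have mp : 0 < mass F [set a | a \in A] by lra.
apply/andP; split; first by apply: divr_ge0; [apply: mass_ge0|apply: ltW].
rewrite ler_pdivrMr // mul1r.
apply: mass_le; first exact: finite_fset.
by move=> x [].
Qed.

Lemma FolX_01 (Rl : realType) (I : choiceType) (F : fusion_algebra Rl I) X :
  0 <= FolX F X <= 1.
Proof.
have ne : exists r, (fun r => exists A : {fset I}, A != fset0 /\
          r = mass F (inner_boundary F X A) / mass F [set a | a \in A]) r.
  by exists (mass F (inner_boundary F X [fset fe F]%fset) / mass F [set a | a \in [fset fe F]%fset]);
    exists [fset fe F]%fset; split => //; apply/fset0Pn; exists (fe F); rewrite inE.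
have lb : has_lbound (fun r => exists A : {fset I}, A != fset0 /\
          r = mass F (inner_boundary F X A) / mass F [set a | a \in A]).
  by exists 0 => r /FolS_01 /andP[].
apply/andP; split.
  by apply: lb_le_inf => // r /FolS_01 /andP[].
case: ne => r hr; apply: le_trans (ge_inf lb hr) _.
by case/andP: (@FolS_01 _ _ F X r hr).
Qed.

Lemma ball_mono (Rl : realType) (I : choiceType) (F : fusion_algebra Rl I) X n m :
  (n <= m)%N -> Defs.ball F X n `<=` Defs.ball F X m.
Proof. by move=> nm a /= h; apply: leq_trans h nm. Qed.

Lemma ball_e (Rl : realType) (I : choiceType) (F : fusion_algebra Rl I) X n :
  Defs.ball F X n (fe F).
Proof. by rewrite /Defs.ball /= ell_e. Qed.

Lemma bd_bound (Rl : realType) (I : choiceType) (F : fusion_algebra Rl I) X n :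
  generating F X -> finite_set (Defs.ball F X n.+1) ->
  FolX F X <= 1 - mass F (Defs.ball F X n) / mass F (Defs.ball F X n.+1).
Proof.
move=> gen fin.
set A := fset_set (Defs.ball F X n.+1).
have eA : [set a | a \in A] = Defs.ball F X n.+1 by exact: fset_setK.
have A0 : A != fset0.
  by apply/fset0Pn; exists (fe F); rewrite in_fset_set // inE; apply: ball_e.
have lb : has_lbound (fun r => exists A : {fset I}, A != fset0 /\
          r = mass F (inner_boundary F X A) / mass F [set a | a \in A]).
  by exists 0 => r /FolS_01 /andP[].
apply: le_trans (ge_inf lb (ex_intro _ A (conj A0 erefl))) _.
rewrite eA.
have m1 : 1 <= mass F (Defs.ball F X n.+1) by apply: (@mass_ge1 _ _ F _ (fe F) fin (ball_e _ _ _)).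
have sub : Defs.ball F X n `<=` Defs.ball F X n.+1 by apply: ball_mono.
have bdsub : inner_boundary F X A `<=` Defs.ball F X n.+1 `\` Defs.ball F X n.
  move=> a [aA [x [xX nsub]]].
  have aB : Defs.ball F X n.+1 a by rewrite -eA.
  split => // aBn; apply: nsub => b bin.
  rewrite in_fset_set // inE /Defs.ball /=.
  apply: (@leq_trans (ell F X a).+1); first by apply: ell_step gen xX _; rewrite -fsuppE.
  exact: aBn.
have := mass_le F (finite_setD _ fin) bdsub.
move=> h; have hD := mass_D F fin sub.
have mpos : 0 < mass F (Defs.ball F X n.+1) by lra.
rewrite ler_pdivrMr // mulrBl mul1r divfK ?gt_eqF //.
lra.
Qed.

Lemma omega_cases (Rl : realType) (I : choiceType) (F : fusion_algebra Rl I) X :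
  generating F X ->
  omegaX F X = 0 \/ (1 <= omegaX F X /\ FolX F X <= 1 - (omegaX F X)^-1).
Proof.
move=> gen.
set B := Defs.ball F X.
set mB := fun n => mass F (B n).
set u := fun n : nat => powR (mB n) (n%:R^-1).
have -> : omegaX F X = limn u by [].
case: (pselect (forall n, finite_set (B n))) => [allfin|nfin]; last first.
  left; have [n0 hn0] : exists n, ~ finite_set (B n) by apply/existsNP.
  apply: norm_lim_near_cst; exists (maxn n0 1) => // n /= hn.
  have hinf : ~ finite_set (B n).
    by move=> fn; apply: hn0; apply: sub_finite_set fn; apply: ball_mono; 
       apply: leq_trans hn; apply: leq_maxl.
  rewrite /u /mB mass_infinite // powR0 // invr_eq0 pnatr_eq0 -lt0n.
  by apply: leq_trans hn; apply: leq_maxr.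
have mB1 : forall n, 1 <= mB n.
  by move=> n; apply: (@mass_ge1 _ _ F _ (fe F) (allfin n) (ball_e _ _ _)).
case: (pselect (cvgn u)) => [cu|ncu]; last first.
  by left; rewrite (dvgP ncu); reflexivity.
right.
have u1 : forall n, 1 <= u n.
  move=> n; rewrite /u -{1}(powRr0 (mB n)); apply: ler_powR => //.
set L := limn u.
have L1 : 1 <= L by apply: limr_ge => //; exists 0%N.
split => //.
rewrite leNgt; apply/negP => hlt.
set q := 1 - FolX F X.
have hq : q < L^-1 by rewrite /q; lra.
have step : forall n, mB n <= q * mB n.+1.
  move=> n; have := bd_bound gen (allfin n.+1).
  have mp : 0 < mB n.+1 by have := mB1 n.+1; lra.
  rewrite -/B -/(mB n) -/(mB n.+1) => h.
  have : mB n / mB n.+1 <= q by rewrite /q; lra.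
  by rewrite ler_pdivrMr.
have qpos : 0 < q.
  have := step 0%N; have := mB1 0%N; have := mB1 1%N; nra.
have grow : forall n, q^-1 ^+ n <= mB n.
  elim=> [|n IH]; first by rewrite expr0.
  rewrite exprS; apply: le_trans (ler_wpM2l _ IH) _; first by rewrite invr_ge0 ltW.
  by rewrite ler_pdivrMl // step.
have uq : forall n, (0 < n)%N -> q^-1 <= u n.
  move=> n n0; rewrite /u.
  have nR : n%:R != 0 :> Rl by rewrite pnatr_eq0 -lt0n.
  have -> : q^-1 = (q^-1 ^+ n) `^ (n%:R^-1).
    by rewrite -powR_mulrn ?invr_ge0 ?ltW // -powRrM mulfV // powRr1 // invr_ge0 ltW.
  apply: ge0_ler_powR; first by rewrite invr_ge0.
  - by rewrite nnegrE exprn_ge0 // invr_ge0 ltW.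
  - by rewrite nnegrE; have := mB1 n; lra.
  exact: grow.
have Lq : q^-1 <= L by apply: limr_ge => //; exists 1%N => // n /= n1; apply: uq.
have e1 : q * q^-1 = 1 by rewrite mulfV // gt_eqF.
have e2 : L * L^-1 = 1 by rewrite mulfV // gt_eqF //; lra.
nra.
Qed.
Unset Implicit Arguments.
Local Close Scope classical_set_scope.
Theorem proposition3p17 (Rl : realType) (I : choiceType)
    (F : fusion_algebra Rl I) (X : {fset I}) :
  generating F X ->
  FolX F X <= 1 - (omegaX F X)^-1 /\ Fol F <= 1 - (omega F)^-1.
Proof.
move=> gen.
have part1 : forall Y, generating F Y -> FolX F Y <= 1 - (omegaX F Y)^-1.
  move=> Y gY; case: (omega_cases gY) => [->|[_ h]] //.
  by rewrite invr0 subr0; case/andP: (FolX_01 F Y).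
split; first exact: part1.
set SO := [set w | exists X, generating F X /\ w = omegaX F X]%classic.
set SF := [set r | exists X, generating F X /\ r = FolX F X]%classic.
have SOge0 : forall w, SO w -> 0 <= w.
  move=> w [Y [gY ->]]; case: (omega_cases gY) => [->|[h _]] //; lra.
have lbO : has_lbound SO by exists 0.
have lbF : has_lbound SF.
  by exists 0 => r [Y [gY ->]]; case/andP: (FolX_01 F Y).
have FolY : forall Y, generating F Y -> Fol F <= FolX F Y.
  by move=> Y gY; apply: (ge_inf lbF); exists Y; split.
case: (pselect (exists Y, generating F Y /\ omegaX F Y = 0)) => [[Y [gY h0]]|nz].
  have om0 : omega F = 0.
    apply/eqP; rewrite eq_le; apply/andP; split.
      by rewrite -h0; apply: (ge_inf lbO); exists Y; split.
    apply: lb_le_inf; last exact: SOge0.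
    by exists (omegaX F Y); exists Y; split.
  rewrite om0 invr0 subr0; apply: le_trans (FolY Y gY) _.
  by case/andP: (FolX_01 F Y).
have all1 : forall Y, generating F Y ->
    1 <= omegaX F Y /\ FolX F Y <= 1 - (omegaX F Y)^-1.
  move=> Y gY; case: (omega_cases gY) => // h0; exfalso; apply: nz.
  by exists Y; split.
have om1 : 1 <= omega F.
  apply: lb_le_inf; first by exists (omegaX F X); exists X; split.
  by move=> w [Y [gY ->]]; case: (all1 Y gY).
rewrite leNgt; apply/negP => hlt.
have Fl1 : Fol F < 1.
  have [h1 h2] := all1 X gen; have := FolY X gen.
  have : 0 < (omegaX F X)^-1 by rewrite invr_gt0; lra.
  lra.
set t := (1 - Fol F)^-1.
have tpos : 0 < t by rewrite /t invr_gt0; lra.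
have tgt : omega F < t.
  have h : 1 - Fol F < (omega F)^-1 by lra.
  rewrite /t -[omega F]invrK ltf_pV2 ?posrE ?invr_gt0 //; lra.
have [w [Y [gY ->]] wlt] : exists2 w, SO w & w < inf SO + (t - omega F).
  apply: inf_adherent; first by lra.
  by split => //; exists (omegaX F X); exists X; split.
have wt : omegaX F Y < t by move: wlt; rewrite -/(omega F); lra.
have [w1 hY] := all1 Y gY.
have : t^-1 < (omegaX F Y)^-1 by rewrite ltf_pV2 ?posrE //; lra.
rewrite /t invrK => hi.
have := FolY Y gY; lra.
Qed.
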